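(* For $\alpha_1,\alpha_2\in\mathbb C$ let $K_2(\alpha_1,\alpha_2)$ be the complex Leibniz algebra with basis $\{l,p_+,p_-,X_1,X_2,X_3\}$ whose only nonzero products are $[l,p_+]=p_+$, $[p_+,l]=-p_+$, $[l,p_-]=-p_-$, $[p_-,l]=p_-$, $[l,l]=\alpha_1X_3$, $[p_+,p_-]=\alpha_2X_3$, $[p_-,p_+]=-\alpha_2X_3$, $[X_1,p_-]=-X_3$, $[X_1,l]=-X_1$, $[X_2,p_+]=X_3$, $[X_2,l]=X_2$. Then every algebra $K_2(\alpha_1,\alpha_2)$ is isomorphic to one of $K_2(1,1)$, $K_2(1,0)$, $K_2(0,1)$, $K_2(0,0)$, and these four algebras are pairwise non-isomorphic.
   Context: A (right) Leibniz algebra is a vector space with a bilinear bracket satisfying $[[x,y],z]=[[x,z],y]+[x,[y,z]]$. *)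

(* Defs.v *)
(* The complex numbers are modelled by algC
   (MathComp's algebraically closed field of characteristic 0). *)
From mathcomp Require Import all_boot all_order all_algebra all_field.
Set Implicit Arguments. Unset Strict Implicit. Unset Printing Implicit Defensive.
Import GRing.Theory.
Local Open Scope ring_scope.

(* An algebra structure on the 6-dimensional space 'rV[algC]_6 is given by
   structure constants c i j = [e_i, e_j]. *)
Definition structure_constants := 'I_6 -> 'I_6 -> 'rV[algC]_6.

Definition bracket (c : structure_constants) (u v : 'rV[algC]_6) : 'rV[algC]_6 :=
  \sum_(i < 6) \sum_(j < 6) (u 0 i * v 0 j) *: c i j.

(* Isomorphism of algebras: an invertible linear map f (given by an invertible
   matrix M acting on row vectors, f u = u *m M) with f [u,v]_B = [f u, f v]_A. *)
Definition alg_iso (A B : structure_constants) : Prop :=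
  exists M : 'M[algC]_6, M \in unitmx /\
    forall u v : 'rV[algC]_6, bracket A (u *m M) (v *m M) = bracket B u v *m M.

(* Basis vectors: e 0 = l, e 1 = p_+, e 2 = p_-, e 3 = X_1, e 4 = X_2, e 5 = X_3. *)
Definition e (k : nat) : 'rV[algC]_6 := delta_mx 0 (inord k).

Definition K2 (a1 a2 : algC) : structure_constants := fun i j =>
  match nat_of_ord i, nat_of_ord j with
  | 0, 1 => e 1
  | 1, 0 => - e 1
  | 0, 2 => - e 2
  | 2, 0 => e 2
  | 0, 0 => a1 *: e 5
  | 1, 2 => a2 *: e 5
  | 2, 1 => - (a2 *: e 5)
  | 3, 2 => - e 5
  | 3, 0 => - e 3
  | 4, 1 => e 5
  | 4, 0 => e 4
  | _, _ => 0
  end.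

(* Main.v *)
Require Import Defs.
From mathcomp Require Import all_boot all_order all_algebra all_field.
From mathcomp Require Import ring.
Import GRing.Theory Num.Theory.
Local Open Scope ring_scope.

Lemma brE a1 a2 u v k : bracket (K2 a1 a2) u v 0 k =
  \sum_(i < 6) \sum_(j < 6) (u 0 i * v 0 j) * K2 a1 a2 i j 0 k.
Proof.
rewrite /bracket summxE; apply: eq_bigr => i _; rewrite summxE; apply: eq_bigr => j _.
by rewrite mxE.
Qed.

Lemma L0 : (ord0 : 'I_6) = inord 0. Proof. by apply: val_inj; rewrite /= inordK. Qed.
Lemma L1 : (lift ord0 ord0 : 'I_6) = inord 1. Proof. by apply: val_inj; rewrite /= inordK. Qed.
Lemma L2 : (lift ord0 (lift ord0 ord0) : 'I_6) = inord 2. Proof. by apply: val_inj; rewrite /= inordK. Qed.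
Lemma L3 : (lift ord0 (lift ord0 (lift ord0 ord0)) : 'I_6) = inord 3. Proof. by apply: val_inj; rewrite /= inordK. Qed.
Lemma L4 : (lift ord0 (lift ord0 (lift ord0 (lift ord0 ord0))) : 'I_6) = inord 4. Proof. by apply: val_inj; rewrite /= inordK. Qed.
Lemma L5 : (lift ord0 (lift ord0 (lift ord0 (lift ord0 (lift ord0 ord0)))) : 'I_6) = inord 5. Proof. by apply: val_inj; rewrite /= inordK. Qed.

Lemma eE n m : (n < 6)%N -> (m < 6)%N -> e n 0 (inord m) = (n == m)%:R.
Proof. by move=> hn hm; rewrite /e mxE /= -(inj_eq val_inj) /= !inordK // eq_sym. Qed.

Lemma ieq n m : (n < 6)%N -> (m < 6)%N -> (inord n == inord m :> 'I_6) = (n == m).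
Proof. by move=> hn hm; rewrite -(inj_eq val_inj) /= !inordK. Qed.

Ltac brsolve := rewrite brE !big_ord_recl !big_ord0 /K2 /= L5 L4 L3 L2 L1 L0 ?mxE ?eE ?ieq //=; try ring.

Notation c u i := (u 0 (@inord 5 i)).

Lemma br0 a1 a2 u v : bracket (K2 a1 a2) u v 0 (inord 0) = 0 :> algC.
Proof. brsolve. Qed.
Lemma br1 a1 a2 u v : bracket (K2 a1 a2) u v 0 (inord 1) = (c u 0) * (c v 1) - (c u 1) * (c v 0).
Proof. brsolve. Qed.
Lemma br2 a1 a2 u v : bracket (K2 a1 a2) u v 0 (inord 2) = - (c u 0) * (c v 2) + (c u 2) * (c v 0).
Proof. brsolve. Qed.
Lemma br3 a1 a2 u v : bracket (K2 a1 a2) u v 0 (inord 3) = - (c u 3) * (c v 0).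
Proof. brsolve. Qed.
Lemma br4 a1 a2 u v : bracket (K2 a1 a2) u v 0 (inord 4) = (c u 4) * (c v 0).
Proof. brsolve. Qed.
Lemma br5 a1 a2 u v : bracket (K2 a1 a2) u v 0 (inord 5) =
  a1 * (c u 0) * (c v 0) + a2 * ((c u 1) * (c v 2) - (c u 2) * (c v 1)) - (c u 3) * (c v 2) + (c u 4) * (c v 1).
Proof. brsolve. Qed.

Lemma coordP (w w' : 'rV[algC]_6) : (forall k, (k < 6)%N -> c w k = c w' k) -> w = w'.
Proof.
move=> h; apply/rowP => i.
by have := h i (ltn_ord i); rewrite inord_val.
Qed.

Lemma twice0 (t : algC) : t = - t -> t = 0.
Proof.
move=> h; have := mulrn_eq0 t 2; rewrite mulr2n {1}h addNr eqxx /=.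
by move/esym/eqP.
Qed.

Definition I1 (A : structure_constants) := exists x y : 'rV[algC]_6,
  bracket A x x = 0 /\ bracket A y x = y /\ y <> 0.
Definition I2 (A : structure_constants) := exists x y z : 'rV[algC]_6,
  bracket A x y = y /\ bracket A x z = - z /\ bracket A y z = 0 /\ y <> 0 /\ z <> 0.

Lemma nz_tr (M : 'M[algC]_6) (y : 'rV_6) : M \in unitmx -> y <> 0 -> y *m M <> 0.
Proof. by move=> hM hy h; apply: hy; rewrite -(mulmxK hM y) h mul0mx. Qed.

Lemma I1_tr A B : alg_iso A B -> I1 B -> I1 A.
Proof.
move=> [M [hM hb]] [x [y [h1 [h2 h3]]]].
exists (x *m M), (y *m M); rewrite !hb h1 h2 mul0mx; split => //; split => //.
exact: nz_tr.
Qed.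

Lemma I2_tr A B : alg_iso A B -> I2 B -> I2 A.
Proof.
move=> [M [hM hb]] [x [y [z [h1 [h2 [h3 [h4 h5]]]]]]].
exists (x *m M), (y *m M), (z *m M); rewrite !hb h1 h2 h3 mul0mx mulNmx.
by do !split => //; apply: nz_tr.
Qed.

Ltac cases k hk := case: k hk => [|[|[|[|[|[|k]]]]]] hk //=.

Lemma I1_yes a2 : I1 (K2 0 a2).
Proof.
exists (e 0), (e 4); split; [|split].
- apply: coordP => k hk; cases k hk;
  rewrite ?(br0, br1, br2, br3, br4, br5) ?eE ?mxE ?eE //=; try ring.
- apply: coordP => k hk; cases k hk;
  rewrite ?(br0, br1, br2, br3, br4, br5) ?eE ?mxE ?eE //=; try ring.
- move/(congr1 (fun w : 'rV[algC]_6 => c w 4)); rewrite eE // mxE /=.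
  by move/eqP; rewrite oner_eq0.
Qed.

Lemma I2_yes a1 : I2 (K2 a1 0).
Proof.
exists (e 0), (e 1), (e 2); do ![split]. all: try (apply: coordP => k hk; cases k hk; rewrite ?(br0, br1, br2, br3, br4, br5) ?eE ?mxE ?eE ?ieq //=; try ring).
- move/(congr1 (fun w : 'rV[algC]_6 => c w 1)); rewrite eE // mxE /=.
  by move/eqP; rewrite oner_eq0.
- move/(congr1 (fun w : 'rV[algC]_6 => c w 2)); rewrite eE // mxE /=.
  by move/eqP; rewrite oner_eq0.
Qed.

Lemma zero6 (w : 'rV[algC]_6) : c w 0 = 0 -> c w 1 = 0 -> c w 2 = 0 ->
  c w 3 = 0 -> c w 4 = 0 -> c w 5 = 0 -> w = 0.
Proof.
move=> h0 h1 h2 h3 h4 h5; apply: coordP => k hk; rewrite mxE; by cases k hk.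
Qed.

Lemma I1_no a2 : ~ I1 (K2 1 a2).
Proof.
move=> [x [y [hx [hy hy0]]]]; apply: hy0.
have X k := congr1 (fun w : 'rV[algC]_6 => c w k) hx.
have Y k := congr1 (fun w : 'rV[algC]_6 => c w k) hy.
move: (X 3) (X 4) (X 5) (Y 0) (Y 1) (Y 2) (Y 3) (Y 4) (Y 5).
rewrite /= ?(br0, br1, br2, br3, br4, br5) !mxE.
move=> h3 h4 h5 y0 y1 y2 y3 y4 y5.
have hx0 : c x 0 = 0.
  case: (eqVneq (c x 0) 0) => // nz.
  have x3 : c x 3 = 0.
    by move/eqP: h3; rewrite mulf_eq0 oppr_eq0 (negbTE nz) orbF => /eqP.
  have x4 : c x 4 = 0.
    by move/eqP: h4; rewrite mulf_eq0 (negbTE nz) orbF => /eqP.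
  have : c x 0 * c x 0 = 1 * c x 0 * c x 0 + a2 * (c x 1 * c x 2 - c x 2 * c x 1)
     - c x 3 * c x 2 + c x 4 * c x 1 by rewrite x3 x4; ring.
  by rewrite h5 => /eqP; rewrite mulf_eq0 orbb (negbTE nz).
have e0 : c y 0 = 0 by rewrite -y0.
have e1 : c y 1 = 0 by rewrite -y1 hx0 e0; ring.
have e2 : c y 2 = 0 by rewrite -y2 hx0 e0; ring.
have e3 : c y 3 = 0 by rewrite -y3 hx0; ring.
have e4 : c y 4 = 0 by rewrite -y4 hx0; ring.
have e5 : c y 5 = 0 by rewrite -y5 hx0 e0 e1 e2 e3 e4; ring.
exact: zero6.
Qed.

Lemma I2_no a1 : ~ I2 (K2 a1 1).
Proof.
move=> [x [y [z [hy [hz [hw [ny nz]]]]]]].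
have Y k := congr1 (fun w : 'rV[algC]_6 => c w k) hy.
have Z k := congr1 (fun w : 'rV[algC]_6 => c w k) hz.
have W k := congr1 (fun w : 'rV[algC]_6 => c w k) hw.
move: (Y 0) (Y 1) (Y 2) (Y 3) (Y 4) (Y 5) (Z 0) (Z 1) (Z 2) (Z 3) (Z 4) (Z 5) (W 5).
rewrite /= ?(br0, br1, br2, br3, br4, br5) !mxE.
move=> y0 y1 y2 y3 y4 y5 z0 z1 z2 z3 z4 z5 w5.
have e0 : c y 0 = 0 by rewrite -y0.
have f0 : c z 0 = 0 by apply/eqP; rewrite -oppr_eq0 -z0.
have e3 : c y 3 = 0 by rewrite -y3 e0; ring.
have e4 : c y 4 = 0 by rewrite -y4 e0; ring.
have f3 : c z 3 = 0 by apply/eqP; rewrite -oppr_eq0 -z3 f0; apply/eqP; ring.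
have f4 : c z 4 = 0 by apply/eqP; rewrite -oppr_eq0 -z4 f0; apply/eqP; ring.
have yz : c y 1 = 0 -> c y 2 = 0 -> False.
  move=> e1 e2; apply: ny; apply: zero6 => //.
  by rewrite -y5 e0 e1 e2; ring.
have zz : c z 1 = 0 -> c z 2 = 0 -> False.
  move=> f1 f2; apply: nz; apply: zero6 => //.
  by apply/eqP; rewrite -oppr_eq0 -z5 f0 f1 f2; apply/eqP; ring.
case: (eqVneq (c y 1) 0) => [e1|ne1].
- have ne2 : c y 2 != 0 by apply/eqP => e2; exact: yz.
  have hh : (c x 0 + 1) * c y 2 = 0.
    by rewrite -[RHS](subrr (c y 2)) -{3}y2 e0; ring.
  move/eqP: hh; rewrite mulf_eq0 (negbTE ne2) orbF addr_eq0 => /eqP hx0.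
  have f2 : c z 2 = 0 by apply: twice0; rewrite -z2 hx0 f0; ring.
  have f1 : c z 1 = 0.
    have : c y 2 * c z 1 = - 0 by rewrite -w5 e0 f0 e1 e3 e4 f2; ring.
    by rewrite oppr0 => /eqP; rewrite mulf_eq0 (negbTE ne2) => /eqP.
  exact: zz.
- have hh : (c x 0 - 1) * c y 1 = 0.
    by rewrite -[RHS](subrr (c y 1)) -{2}y1 e0; ring.
  move/eqP: hh; rewrite mulf_eq0 (negbTE ne1) orbF subr_eq0 => /eqP hx0.
  have e2 : c y 2 = 0 by apply: twice0; rewrite -{1}y2 hx0 e0; ring.
  have f1 : c z 1 = 0 by apply: twice0; rewrite -z1 hx0 f0; ring.
  have f2 : c z 2 = 0.
    have : c y 1 * c z 2 = 0 by rewrite -w5 e0 f0 f1 e2 e3 e4; ring.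
    by move/eqP; rewrite mulf_eq0 (negbTE ne1) => /eqP.
  exact: zz.
Qed.

Definition dg (l : seq algC) : 'M[algC]_6 := diag_mx (\row_(i < 6) l`_i).

Lemma cdg (w : 'rV[algC]_6) l k : (k < 6)%N -> c (w *m dg l) k = c w k * l`_k.
Proof. by move=> hk; rewrite /dg mul_mx_diag !mxE inordK. Qed.

Lemma diso a1 a2 b1 b2 (l : seq algC) :
  (forall k, (k < 6)%N -> l`_k != 0) ->
  (forall u v : 'rV[algC]_6, forall k, (k < 6)%N ->
     c (bracket (K2 a1 a2) (u *m dg l) (v *m dg l)) k =
     c (bracket (K2 b1 b2) u v) k * l`_k) ->
  alg_iso (K2 a1 a2) (K2 b1 b2).
Proof.
move=> hnz hb; exists (dg l); split.
  rewrite unitmxE /dg det_diag unitfE; apply/prodf_neq0 => i _.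
  by rewrite mxE; apply: hnz.
move=> u v; apply: coordP => k hk; rewrite hb // cdg //.
Qed.

Lemma iso_all a1 a2 :
      alg_iso (K2 a1 a2) (K2 1 1) \/ alg_iso (K2 a1 a2) (K2 1 0) \/
      alg_iso (K2 a1 a2) (K2 0 1) \/ alg_iso (K2 a1 a2) (K2 0 0).
Proof.
case: (eqVneq a1 0) => [->|h1]; case: (eqVneq a2 0) => [->|h2].
- right; right; right; exists 1%:M; split; first exact: unitmx1.
  by move=> u v; rewrite !mulmx1.
- right; right; left; apply: (@diso _ _ _ _ [:: 1; 1; 1; a2; a2; a2]).
    by move=> k hk; cases k hk; rewrite oner_eq0.
  move=> u v k hk; cases k hk;
  rewrite ?(br0, br1, br2, br3, br4, br5) ?cdg //=; ring.
- right; left; apply: (@diso _ _ _ _ [:: 1; 1; 1; a1; a1; a1]).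
    by move=> k hk; cases k hk; rewrite oner_eq0.
  move=> u v k hk; cases k hk;
  rewrite ?(br0, br1, br2, br3, br4, br5) ?cdg //=; ring.
- left; apply: (@diso _ _ _ _ [:: 1; a1 / a2; 1; a1; a2; a1]).
    move=> k hk; cases k hk; rewrite ?oner_eq0 //.
    by rewrite mulf_neq0 // invr_eq0.
  move=> u v k hk; cases k hk;
  rewrite ?(br0, br1, br2, br3, br4, br5) ?cdg //=; field; done.
Qed.

Theorem mainTheorem5 :
  (forall a1 a2 : algC,
      alg_iso (K2 a1 a2) (K2 1 1) \/ alg_iso (K2 a1 a2) (K2 1 0) \/
      alg_iso (K2 a1 a2) (K2 0 1) \/ alg_iso (K2 a1 a2) (K2 0 0)) /\
  ~ alg_iso (K2 1 1) (K2 1 0) /\ ~ alg_iso (K2 1 1) (K2 0 1) /\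
  ~ alg_iso (K2 1 1) (K2 0 0) /\ ~ alg_iso (K2 1 0) (K2 0 1) /\
  ~ alg_iso (K2 1 0) (K2 0 0) /\ ~ alg_iso (K2 0 1) (K2 0 0).
Proof.
split; first exact: iso_all.
split; first by move=> h; apply: (@I2_no 1); apply: I2_tr h (I2_yes _).
split; first by move=> h; apply: (@I1_no 1); apply: I1_tr h (I1_yes _).
split; first by move=> h; apply: (@I1_no 1); apply: I1_tr h (I1_yes _).
split; first by move=> h; apply: (@I1_no 0); apply: I1_tr h (I1_yes _).
split; first by move=> h; apply: (@I1_no 0); apply: I1_tr h (I1_yes _).
by move=> h; apply: (@I2_no 0); apply: I2_tr h (I2_yes _).
Qed.
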